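(* Let $n\ge2$, $A\in\mathbb{R}^{n\times d}$, $\mathcal{B}_d=\{\mathbf{w}\in\mathbb{R}^d:\|\mathbf{w}\|_2\le1\}$, and let $\alpha_t=1$. (MPFP.) Let $c=\sqrt{\log n}+\frac{1}{\sqrt2}$, $\alpha_{\mathbf{w}}=\frac{\sqrt{\log n}}{c}$, $\alpha_{\mathbf{p}}=\frac{1}{\sqrt{\log n}\,c}$, $\gamma_t=\frac1c$, and $R(\mathbf{w},\mathbf{p})=\alpha_{\mathbf{w}}\frac12\|\mathbf{w}\|_2^2+\alpha_{\mathbf{p}}E(\mathbf{p})$ on $\mathcal{Z}=\mathcal{B}_d\times\Delta^n$. Let $F(\mathbf{w},\mathbf{p})=[-A^{\top}\mathbf{p};A\mathbf{w}]\in\mathbb{R}^{d+n}$ and $\mathrm{Prox}^R_{\mathbf{v}}(\mathbf{z})=\arg\min_{\mathbf{u}\in\mathcal{Z}}\{\mathbf{u}^{\top}\mathbf{z}+D_R(\mathbf{u},\mathbf{v})\}$. Set $\mathbf{v}_1=[\mathbf{0};\tfrac{\mathbf{1}}{n}]$ and for $t=1,\dots,T$: $\mathbf{u}_t=\mathrm{Prox}^R_{\mathbf{v}_t}(\gamma_tF(\mathbf{v}_t))$, $\mathbf{v}_{t+1}=\mathrm{Prox}^R_{\mathbf{v}_t}(\gamma_tF(\mathbf{u}_t))$, $\mathbf{z}_t=\frac{\sum_{s=1}^t\gamma_s\mathbf{u}_s}{\sum_{s=1}^t\gamma_s}$. (Optimistic mirror descent dynamics.) $\widehat{\mathbf{w}}_0=\mathbf{0}$,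 $\widehat{\mathbf{p}}_0=\tfrac{\mathbf{1}}{n}$; for $t=1,\dots,T$: $\mathbf{w}_t=\arg\min_{\mathbf{w}\in\mathcal{B}_d}\frac{1}{\sqrt{\log n}}\langle-A^{\top}\widehat{\mathbf{p}}_{t-1},\mathbf{w}\rangle+\frac12\|\mathbf{w}-\widehat{\mathbf{w}}_{t-1}\|_2^2$, $\mathbf{p}_t=\arg\min_{\mathbf{p}\in\Delta^n}\sqrt{\log n}\langle A\widehat{\mathbf{w}}_{t-1},\mathbf{p}\rangle+D_E(\mathbf{p},\widehat{\mathbf{p}}_{t-1})$, $\widehat{\mathbf{w}}_t=\arg\min_{\mathbf{w}\in\mathcal{B}_d}\frac{1}{\sqrt{\log n}}\langle-A^{\top}\mathbf{p}_t,\mathbf{w}\rangle+\frac12\|\mathbf{w}-\widehat{\mathbf{w}}_{t-1}\|_2^2$, $\widehat{\mathbf{p}}_t=\arg\min_{\mathbf{p}\in\Delta^n}\sqrt{\log n}\langle A\mathbf{w}_t,\mathbf{p}\rangle+D_E(\mathbf{p},\widehat{\mathbf{p}}_{t-1})$. Then for every $t\in[T]$: $\mathbf{u}_t=[\mathbf{w}_t;\mathbf{p}_t]$, $\mathbf{v}_{t+1}=[\widehat{\mathbf{w}}_t;\widehat{\mathbf{p}}_t]$, and $\mathbf{z}_t=\big[\frac1t\sum_{s=1}^t\mathbf{w}_s;\frac1t\sum_{s=1}^t\mathbf{p}_s\big]$.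
   Context: $\Delta^n$ is the probability simplex; $\mathbf{1}$ the all-ones vector; $[\mathbf{x};\mathbf{y}]$ denotes concatenation. $E(\mathbf{p})=\sum_ip_i\log p_i$ is the negative entropy, $D_E(\mathbf{p},\mathbf{q})=\sum_ip_i\log(p_i/q_i)$ its Bregman divergence, and $D_R(\mathbf{u},\mathbf{v})=R(\mathbf{u})-R(\mathbf{v})-(\mathbf{u}-\mathbf{v})^{\top}\nabla R(\mathbf{v})$. MPFP is the mirror-prox feasibility algorithm of Yu, Kılınç-Karzan and Carbonell specialized to the bilinear objective $\mathbf{p}^{\top}A\mathbf{w}$. *)

(* Defs.v *)
From HB Require Import structures.
From mathcomp Require Import all_boot all_order all_algebra.
From mathcomp Require Import reals exp.
Set Implicit Arguments. Unset Strict Implicit. Unset Printing Implicit Defensive.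
Import Order.TTheory GRing.Theory Num.Theory.
Local Open Scope ring_scope.

Section Defs.
Variable R : realType.

Definition dot k (x y : 'cV[R]_k) : R := \sum_(i < k) x i 0 * y i 0.

Definition in_ball d (w : 'cV[R]_d) : Prop := dot w w <= 1.

Definition in_simplex n (p : 'cV[R]_n) : Prop :=
  (forall i, 0 <= p i 0) /\ \sum_(i < n) p i 0 = 1.

Definition unif n : 'cV[R]_n := const_mx (n%:R)^-1.

(* negative entropy E(p) = sum p_i log p_i  (ln 0 = 0, so 0 log 0 = 0) *)
Definition negent n (p : 'cV[R]_n) : R := \sum_(i < n) p i 0 * ln (p i 0).

(* its gradient, coordinates log p_i + 1 (used only at interior points) *)
Definition grad_negent n (p : 'cV[R]_n) : 'cV[R]_n :=
  \col_i (ln (p i 0) + 1).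

Definition DE n (p q : 'cV[R]_n) : R :=
  \sum_(i < n) p i 0 * ln (p i 0 / q i 0).

Definition is_argmin T (S : T -> Prop) (f : T -> R) (x : T) : Prop :=
  S x /\ forall y, S y -> f x <= f y.

Definition in_Z d n (z : 'cV[R]_(d + n)) : Prop :=
  in_ball (usubmx z) /\ in_simplex (dsubmx z).

Definition Rreg d n (aw ap : R) (z : 'cV[R]_(d + n)) : R :=
  aw * (2^-1 * dot (usubmx z) (usubmx z)) + ap * negent (dsubmx z).

Definition grad_Rreg d n (aw ap : R) (z : 'cV[R]_(d + n)) : 'cV[R]_(d + n) :=
  col_mx (aw *: usubmx z) (ap *: grad_negent (dsubmx z)).

Definition DR d n (aw ap : R) (u v : 'cV[R]_(d + n)) : R :=
  Rreg aw ap u - Rreg aw ap v - dot (u - v) (grad_Rreg aw ap v).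

Definition Fop d n (A : 'M[R]_(n, d)) (z : 'cV[R]_(d + n)) : 'cV[R]_(d + n) :=
  col_mx (- (A^T *m dsubmx z)) (A *m usubmx z).

Definition is_prox d n (aw ap : R) (v g u : 'cV[R]_(d + n)) : Prop :=
  is_argmin (@in_Z d n) (fun x => dot x g + DR aw ap x v) u.

End Defs.

(* Main.v *)
Require Import Defs.
From HB Require Import structures.
From mathcomp Require Import all_boot all_order all_algebra.
From mathcomp Require Import reals exp.
From mathcomp Require Import sequences ring lra.
Import Order.TTheory GRing.Theory Num.Theory.
Local Open Scope ring_scope.

Local Set Implicit Arguments. Local Unset Strict Implicit.
Section H.
Variable R : realType.

Lemma dot_col_mx m k (a c : 'cV[R]_m) (b e : 'cV[R]_k) :
  dot (col_mx a b) (col_mx c e) = dot a c + dot b e.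
Proof.
rewrite /dot big_split_ord /=; congr (_ + _); apply: eq_bigr => i _.
  by rewrite !col_mxEu.
by rewrite !col_mxEd.
Qed.

Lemma dotC k (a b : 'cV[R]_k) : dot a b = dot b a.
Proof. by rewrite /dot; apply: eq_bigr => i _; rewrite mulrC. Qed.

Lemma dotDl k (a b c : 'cV[R]_k) : dot (a + b) c = dot a c + dot b c.
Proof. by rewrite /dot -big_split; apply: eq_bigr => i _; rewrite !mxE mulrDl. Qed.

Lemma dotNl k (a c : 'cV[R]_k) : dot (- a) c = - dot a c.
Proof. by rewrite /dot -sumrN; apply: eq_bigr => i _; rewrite !mxE mulNr. Qed.

Lemma dotZl k x (a c : 'cV[R]_k) : dot (x *: a) c = x * dot a c.
Proof. by rewrite /dot mulr_sumr; apply: eq_bigr => i _; rewrite !mxE mulrA. Qed.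

Lemma dotBl k (a b c : 'cV[R]_k) : dot (a - b) c = dot a c - dot b c.
Proof. by rewrite dotDl dotNl. Qed.

Lemma dotDr k (a b c : 'cV[R]_k) : dot c (a + b) = dot c a + dot c b.
Proof. by rewrite dotC dotDl !(dotC c). Qed.
Lemma dotBr k (a b c : 'cV[R]_k) : dot c (a - b) = dot c a - dot c b.
Proof. by rewrite dotC dotBl !(dotC c). Qed.
Lemma dotZr k x (a c : 'cV[R]_k) : dot c (x *: a) = x * dot c a.
Proof. by rewrite dotC dotZl dotC. Qed.

Lemma dotNr k (a c : 'cV[R]_k) : dot c (- a) = - dot c a.
Proof. by rewrite dotC dotNl dotC. Qed.

Lemma dot_ge0 k (a : 'cV[R]_k) : 0 <= dot a a.
Proof. by rewrite /dot; apply: sumr_ge0 => i _; rewrite -expr2 sqr_ge0. Qed.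

Lemma dot_eq0 k (a : 'cV[R]_k) : dot a a = 0 -> a = 0.
Proof.
move=> h; rewrite /dot in h.
have H := psumr_eq0P (fun i _ => (ltac:(rewrite -expr2 sqr_ge0 //) : 0 <= a i 0 * a i 0)) h.
apply/matrixP => i j; rewrite (ord1 j) mxE.
by have /eqP := H i isT; rewrite -expr2 sqrf_eq0 => /eqP.
Qed.

Lemma ball_uniq d (k : R) (b y x1 x2 : 'cV[R]_d) :
  let h := fun x => k * dot b x + 2^-1 * dot (x - y) (x - y) in
  is_argmin (@in_ball R d) h x1 -> is_argmin (@in_ball R d) h x2 -> x1 = x2.
Proof.
move=> h [B1 H1] [B2 H2].
set m := 2^-1 *: (x1 + x2).
have Bm : in_ball m.
  rewrite /in_ball /m in B1 B2 *.
  have := dot_ge0 (x1 - x2).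
  rewrite !(dotZl, dotZr, dotDl, dotDr, dotNl, dotNr) (dotC x2 x1).
  move: B1 B2; set a := dot x1 x1; set b' := dot x2 x2; set e := dot x1 x2.
  move=> B1 B2 P; nra.
have E : h m = 2^-1 * (h x1 + h x2) - 8^-1 * dot (x1 - x2) (x1 - x2).
  rewrite /h /m !(dotZl, dotZr, dotDl, dotDr, dotNl, dotNr).
  rewrite (dotC x2 x1) (dotC y x1) (dotC y x2); by field.
have := H1 _ B2; have := H2 _ B1; have := H1 _ Bm; rewrite E.
have := dot_ge0 (x1 - x2) => P a1 a2 a3.
have D : dot (x1 - x2) (x1 - x2) = 0 by lra.
by apply/eqP; rewrite -subr_eq0; apply/eqP/dot_eq0.
Qed.

Lemma gibbs_term (q r : R) : 0 <= q -> 0 < r ->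
  0 <= q * ln (q / r) - (q - r) /\ (q * ln (q / r) - (q - r) = 0 -> q = r).
Proof.
move=> q0 r0; have [->|qp] := eqVneq q 0.
  by rewrite mul0r; split => [|h]; lra.
have qg : 0 < q by rewrite lt0r qp q0.
have qr : 0 < q / r by rewrite divr_gt0.
set y := ln (q / r).
have ey : expR (- y) = r / q.
  by rewrite expRN /y lnK ?posrE // invf_div.
have Hr : r = q * expR (- y) by rewrite ey mulrC divfK // gt_eqF.
split.
  rewrite Hr; have := expR_ge1Dx (- y); nra.
move=> h; have [y0|yn] := eqVneq y 0.
  move: y0; rewrite /y => /eqP; rewrite ln_eq0 // => /eqP.
  by move/(congr1 (fun t => t * r)); rewrite mul1r divfK // gt_eqF.
have := @expR_gt1Dx R (- y); rewrite oppr_eq0 yn => /(_ isT) H.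
by move: h; rewrite Hr => h; exfalso; nra.
Qed.

Lemma simplex_argmin n (k : R) (b r : 'cV[R]_n) :
  (forall i, 0 < r i 0) -> \sum_(i < n) r i 0 = 1 ->
  exists qs : 'cV[R]_n, (forall i, 0 < qs i 0) /\ \sum_(i < n) qs i 0 = 1 /\
  forall q, is_argmin (@in_simplex R n) (fun q => k * dot b q + DE q r) q -> q = qs.
Proof.
move=> rp r1.
pose e i := r i 0 * expR (- (k * b i 0)).
pose Z := \sum_(i < n) e i.
have ep i : 0 < e i by rewrite mulr_gt0 // expR_gt0.
have Zp : 0 < Z.
  have Z0 : 0 <= Z by apply: sumr_ge0 => i _; exact: ltW.
  rewrite lt0r Z0 andbT; apply/eqP => /(psumr_eq0P (fun i _ => ltW (ep i))) H.
  have : \sum_(i < n) r i 0 = 0.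
    apply: big1 => i _; have := H i isT; rewrite /e => /eqP.
    by rewrite mulf_eq0 (gt_eqF (expR_gt0 _)) orbF => /eqP.
  by rewrite r1 => /eqP; rewrite oner_eq0.
pose qs : 'cV[R]_n := \col_i (e i / Z).
have qsp i : 0 < qs i 0 by rewrite mxE divr_gt0.
have qs1 : \sum_(i < n) qs i 0 = 1.
  rewrite (eq_bigr (fun i => e i * Z^-1)); last by move=> i _; rewrite mxE.
  by rewrite -mulr_suml divff // gt_eqF.
have Id q : in_simplex q ->
    k * dot b q + DE q r = \sum_(i < n) (q i 0 * ln (q i 0 / qs i 0)) - ln Z.
  move=> [q0 q1].
  have -> : ln Z = \sum_(i < n) (ln Z * q i 0) by rewrite -mulr_sumr q1 mulr1.
  rewrite /dot /DE mulr_sumr -big_split -sumrB; apply: eq_bigr => i _ /=.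
  have [->|qn] := eqVneq (q i 0) 0; first by rewrite !(mulr0, mul0r) subr0 addr0.
  have qg : 0 < q i 0 by rewrite lt0r qn q0.
  rewrite !ln_div ?posrE // mxE ln_div ?posrE // /e lnM ?posrE ?expR_gt0 // expRK.
  ring.
have qsS : in_simplex qs by split => // i; exact: ltW.
exists qs; split => //; split => // q [qS H].
have := H _ qsS; rewrite !Id //.
have -> : \sum_(i < n) qs i 0 * ln (qs i 0 / qs i 0) = 0.
  by apply: big1 => i _; rewrite divff ?gt_eqF // ln1 mulr0.
move=> Hle.
case: qS => q0 q1.
pose t i := q i 0 * ln (q i 0 / qs i 0) - (q i 0 - qs i 0).
have tge i : 0 <= t i by have [] := gibbs_term (q0 i) (qsp i).
have st : \sum_(i < n) t i = \sum_(i < n) (q i 0 * ln (q i 0 / qs i 0)).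
  by rewrite sumrB sumrB q1 qs1 subrr subr0.
have st0 : \sum_(i < n) t i = 0.
  apply/le_anti; rewrite sumr_ge0 // andbT st; lra.
apply/matrixP => i j; rewrite (ord1 j).
have [_ ] := gibbs_term (q0 i) (qsp i); apply.
have H0 : forall i : 'I_n, true -> 0 <= t i by move=> *; apply: tge.
have := psumr_eq0P H0 st0; rewrite /t; apply => //.
Qed.

Lemma DR_split d n aw ap (x y : 'cV[R]_d) (q r : 'cV[R]_n) :
  (forall i, 0 < r i 0) -> \sum_(i < n) r i 0 = 1 -> in_simplex q ->
  DR aw ap (col_mx x q) (col_mx y r) =
    aw * (2^-1 * dot (x - y) (x - y)) + ap * DE q r.
Proof.
move=> rp r1 [q0 q1].
have KE : negent q - negent r - dot (q - r) (grad_negent r) = DE q r.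
  rewrite /negent /DE /dot.
  have -> : \sum_(i < n) q i 0 * ln (q i 0 / r i 0) =
            \sum_(i < n) (q i 0 * ln (q i 0 / r i 0) - (q i 0 - r i 0)).
    by rewrite sumrB sumrB q1 r1 subrr subr0.
  rewrite -!sumrB; apply: eq_bigr => i _; rewrite !mxE.
  have [->|qn] := eqVneq (q i 0) 0; first by rewrite !mul0r; ring.
  have qg : 0 < q i 0 by rewrite lt0r qn q0.
  rewrite ln_div ?posrE //; ring.
rewrite /DR /Rreg /grad_Rreg !col_mxKu !col_mxKd opp_col_mx add_col_mx dot_col_mx.
rewrite !dotZr -KE.
rewrite !(dotDl, dotDr, dotNl, dotNr) (dotC y x).
set X := dot x x; set Y := dot y y; set XY := dot x y; set Q := negent q; set P := negent r; set G1 := dot q _; set G2 := dot r _.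
match goal with |- ?a = ?b => change (@eq R a b) end. by field.
Qed.

Lemma prox_step d n (A : 'M[R]_(n, d)) (s c : R) (y ws x0 : 'cV[R]_d)
  (r ps q0 : 'cV[R]_n) (U : 'cV[R]_(d + n)) :
  0 < s -> 0 < c -> (forall i, 0 < r i 0) -> \sum_(i < n) r i 0 = 1 ->
  is_prox (s / c) ((s * c)^-1) (col_mx y r) (c^-1 *: Fop A (col_mx ws ps)) U ->
  is_argmin (@in_ball R d)
    (fun x => s^-1 * dot (- (A^T *m ps)) x + 2^-1 * dot (x - y) (x - y)) x0 ->
  is_argmin (@in_simplex R n) (fun q => s * dot (A *m ws) q + DE q r) q0 ->
  U = col_mx x0 q0 /\ (forall i, 0 < q0 i 0) /\ \sum_(i < n) q0 i 0 = 1.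
Proof.
move=> sp cp rp r1 HU Hx0 Hq0.
have [qs [qsp [qs1 Hq]]] := simplex_argmin s (A *m ws) rp r1.
have q0E := Hq _ Hq0.
set h := (fun x => s^-1 * dot (- (A^T *m ps)) x + 2^-1 * dot (x - y) (x - y)) in Hx0.
set g := (fun q => s * dot (A *m ws) q + DE q r) in Hq0 Hq.
have sn : s != 0 by rewrite gt_eqF.
have cn : c != 0 by rewrite gt_eqF.
have Phi x q : in_simplex q ->
    dot (col_mx x q) (c^-1 *: Fop A (col_mx ws ps)) + DR (s / c) ((s * c)^-1) (col_mx x q) (col_mx y r)
    = s / c * h x + (s * c)^-1 * g q.
  move=> qS; rewrite DR_split // /Fop !col_mxKu !col_mxKd scale_col_mx dot_col_mx !dotZr.
  rewrite /h /g (dotC x) (dotC q) !dotNl; field; by rewrite ?sn ?cn.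
have awp : 0 < s / c by rewrite divr_gt0.
have app : 0 < (s * c)^-1 by rewrite invr_gt0 mulr_gt0.
case: HU => [[UB US] HU].
have hx : is_argmin (@in_ball R d) h (usubmx U).
  split => // x' Bx'.
  have := HU (col_mx x' (dsubmx U)).
  rewrite /in_Z col_mxKu col_mxKd => /(_ (conj Bx' US)).
  have := Phi (usubmx U) (dsubmx U) US; rewrite vsubmxK => ->.
  rewrite Phi // lerD2r ler_pM2l //.
have gq : is_argmin (@in_simplex R n) g (dsubmx U).
  split => // q' Sq'.
  have := HU (col_mx (usubmx U) q').
  rewrite /in_Z col_mxKu col_mxKd => /(_ (conj UB Sq')).
  have := Phi (usubmx U) (dsubmx U) US; rewrite vsubmxK => ->.
  rewrite Phi // lerD2l ler_pM2l //.
rewrite -(vsubmxK U) (ball_uniq hx Hx0) (Hq _ gq) -q0E; split => //.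
by rewrite q0E.
Qed.

Lemma sum_col_mx m1 m2 (I : Type) (r : seq I) (P : pred I)
  (F : I -> 'cV[R]_m1) (G : I -> 'cV[R]_m2) :
  \sum_(i <- r | P i) col_mx (F i) (G i) =
  col_mx (\sum_(i <- r | P i) F i) (\sum_(i <- r | P i) G i).
Proof.
apply: (big_rec3 (fun a b c => a = col_mx b c)) => [|i a b c _ ->].
  by rewrite col_mx0.
by rewrite add_col_mx.
Qed.
End H.

Theorem theorem8 (R : realType) (n d T : nat) (hn : (2 <= n)%N)
  (A : 'M[R]_(n, d))
  (u v z : nat -> 'cV[R]_(d + n))
  (w what : nat -> 'cV[R]_d) (p phat : nat -> 'cV[R]_n) :
  let L := ln (n%:R : R) in
  let c := Num.sqrt L + (Num.sqrt 2)^-1 in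
  let aw := Num.sqrt L / c in
  let ap := (Num.sqrt L * c)^-1 in
  let gam := c^-1 in
  (* MPFP *)
  v 1%N = col_mx 0 (unif R n) ->
  (forall t, (1 <= t <= T)%N -> is_prox aw ap (v t) (gam *: Fop A (v t)) (u t)) ->
  (forall t, (1 <= t <= T)%N -> is_prox aw ap (v t) (gam *: Fop A (u t)) (v t.+1)) ->
  (forall t, (1 <= t <= T)%N ->
     z t = (\sum_(1 <= s < t.+1) gam)^-1 *: \sum_(1 <= s < t.+1) (gam *: u s)) ->
  (* optimistic mirror descent *)
  what 0%N = 0 -> phat 0%N = unif R n ->
  (forall t, (1 <= t <= T)%N ->
     is_argmin (@in_ball R d)
       (fun x => (Num.sqrt L)^-1 * dot (- (A^T *m phat t.-1)) x
                 + 2^-1 * dot (x - what t.-1) (x - what t.-1)) (w t)) ->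
  (forall t, (1 <= t <= T)%N ->
     is_argmin (@in_simplex R n)
       (fun q => Num.sqrt L * dot (A *m what t.-1) q + DE q (phat t.-1)) (p t)) ->
  (forall t, (1 <= t <= T)%N ->
     is_argmin (@in_ball R d)
       (fun x => (Num.sqrt L)^-1 * dot (- (A^T *m p t)) x
                 + 2^-1 * dot (x - what t.-1) (x - what t.-1)) (what t)) ->
  (forall t, (1 <= t <= T)%N ->
     is_argmin (@in_simplex R n)
       (fun q => Num.sqrt L * dot (A *m w t) q + DE q (phat t.-1)) (phat t)) ->
  forall t, (1 <= t <= T)%N ->
    [/\ u t = col_mx (w t) (p t),
        v t.+1 = col_mx (what t) (phat t) &
        z t = col_mx ((t%:R)^-1 *: \sum_(1 <= s < t.+1) w s)
                     ((t%:R)^-1 *: \sum_(1 <= s < t.+1) p s)].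
Proof.
move=> L c aw ap gam v1 Hu Hv Hz what0 phat0 Hw Hp Hwh Hph.
have Lp : 0 < L by rewrite /L ln_gt0 // ltr1n.
have sp : 0 < Num.sqrt L by rewrite sqrtr_gt0.
have cp : 0 < c by rewrite /c addr_gt0 // invr_gt0 sqrtr_gt0.
have nR : 0 < (n%:R : R) by rewrite ltr0n (leq_trans _ hn).
have IH : forall t, (1 <= t <= T)%N ->
   v t = col_mx (what t.-1) (phat t.-1) /\ (forall i, 0 < phat t.-1 i 0)
   /\ \sum_(i < n) phat t.-1 i 0 = 1.
  elim => [//|t IH] /andP[_ tT].
  case: t IH tT => [|t] IH tT.
    rewrite v1 what0 phat0 /=; split => //; split.
      by move=> i; rewrite mxE invr_gt0.
    rewrite (eq_bigr (fun _ => (n%:R : R)^-1)); last by move=> i _; rewrite mxE.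
    by rewrite sumr_const card_ord -(mulr_natr ((n%:R : R)^-1)) mulVf // gt_eqF.
  have t1 : (1 <= t.+1 <= T)%N by rewrite /= ltnW.
  have [vE [pp p1]] := IH t1.
  have Hu1 := Hu _ t1; rewrite vE in Hu1.
  have [uE _] := prox_step sp cp pp p1 Hu1 (Hw _ t1) (Hp _ t1).
  have Hv1 := Hv _ t1; rewrite vE uE in Hv1.
  have [vE2 [pp2 p12]] := prox_step sp cp pp p1 Hv1 (Hwh _ t1) (Hph _ t1).
  by [].
have Step : forall t, (1 <= t <= T)%N ->
    u t = col_mx (w t) (p t) /\ v t.+1 = col_mx (what t) (phat t).
  move=> t tT; have [vE [pp p1]] := IH t tT.
  have Hu1 := Hu _ tT; rewrite vE in Hu1.
  have [uE _] := prox_step sp cp pp p1 Hu1 (Hw _ tT) (Hp _ tT).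
  have Hv1 := Hv _ tT; rewrite vE uE in Hv1.
  by have [vE2 _] := prox_step sp cp pp p1 Hv1 (Hwh _ tT) (Hph _ tT).
move=> t tT; have [uE vE] := Step t tT; split => //.
have /andP[t1 tT'] := tT.
rewrite Hz // sumr_const_nat subn1 /= -scaler_sumr scalerA.
have -> : \sum_(1 <= s < t.+1) u s = \sum_(1 <= s < t.+1) col_mx (w s) (p s).
  apply: eq_big_nat => s /andP[s1 st].
  by have [] := Step s; rewrite ?s1 ?(leq_trans _ tT') //= -ltnS.
have gn : gam != 0 by rewrite invr_eq0 gt_eqF.
have tn : (t%:R : R) != 0 by rewrite pnatr_eq0 -lt0n.
have -> : (gam *+ t)^-1 * gam = (t%:R)^-1.
  by rewrite -mulr_natr; field; rewrite ?gn ?tn.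
by rewrite sum_col_mx scale_col_mx.
Qed.
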